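(* In the ternary soft heap with threshold $r_0=\max(2,\lceil\lg(1/\epsilon)\rceil)$, for every item $e$ stored at a node of rank $r$, $|C(e)|\le c_r$ where $c_r=0$ for $r\le r_0$ and $c_r=2^{r-r_0}-1$ for $r>r_0$.
   Context: Ternary soft heap with error parameter $0<\epsilon<1$ and threshold $r_0=\max(2,\lceil\lg(1/\epsilon)\rceil)$ ($\lg$ = binary logarithm). Items are (key, value) pairs with distinct keys from a totally ordered universe. A rank-$r$ tree is a perfectly balanced rooted tree in which every internal node has exactly $3$ children and all $3^r$ leaves are at depth $r$; a node whose subtree has height $r$ has rank $r$. Each leaf corresponds to a distinct insertion. Each node holds at most one item (it may be empty); the tree is heap-ordered (an item's key is at most the keys of items at descendants). Each item $e$ held at a node carries a corruption-set $C(e)$ (empty when inserted). The heap is a list of trees in nondecreasing rank order, with at most $2$ trees of each rank, together with suffix-min references to roots. \textsf{insert}$(e)$: add a rank-$0$ tree holding $e$ at the front; while the first three trees have equal rank $r$, link them: create a new node of rank $r+1$ with the three roots as children and fill it. Filling an empty node $v$ of rank $r$: a single pull moves to $v$ the minimum-key item among $v$'s children and then recursively fills the child it came from (a node whose subtree holds no items stays empty). If $r\le r_0$, $v$ is filled by one pull; if $r>r_0$, two items $e_1,e_2$ with $\mathrm{key}(e_1)\le\mathrm{key}(e_2)$ are pulled up successively, $e_1$ and all of $C(e_1)$ are added to $C(e_2)$ ($e_1$ becomes corrupted), and $e_2$ is stored at $v$ (if only one item is available, it is stored). \textsf{extract-min}: let $e$ be the minimum-key item among roots; if $C(e)\neq\emptyset$,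 remove and return an item of $C(e)$ with current key $\mathrm{key}(e)$; otherwise remove $e$, refill its root, update suffix-min references, and return $e$ with the corruptions created. Corrupted items are exactly those in corruption-sets; an item in $C(e')$ has current key $\mathrm{key}(e')$. *)

(* Defs.v *)
From HB Require Import structures.
From mathcomp Require Import all_boot all_order all_algebra.
From mathcomp Require Import reals exp.
From Stdlib Require List.
Set Implicit Arguments. Unset Strict Implicit. Unset Printing Implicit Defensive.
Import Order.TTheory GRing.Theory Num.Theory.

Definition r0_of (R : realType) (eps : R) : nat :=
  maxn 2 `|Num.ceil (ln (eps^-1) / ln 2)|%N.

Definition c_bound (r0 r : nat) : nat :=
  if r <= r0 then 0 else 2 ^ (r - r0) - 1.

Section SoftHeap.
Context {disp : Order.disp_t} {K : orderType disp} {V : Type}.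
Local Open Scope order_scope.

Definition item := (K * V)%type.
(* an item held at a node together with its corruption-set C(e) *)
Definition cell := (item * seq item)%type.
Definition ckey (x : cell) : K := x.1.1.

Inductive tree :=
| Leaf of option cell
| Node3 of option cell & tree & tree & tree.

(* rank of a node = height of its subtree *)
Fixpoint height (t : tree) : nat :=
  match t with
  | Leaf _ => 0
  | Node3 _ a b c => (maxn (height a) (maxn (height b) (height c))).+1
  end.

Definition root (t : tree) : option cell :=
  match t with Leaf o => o | Node3 o _ _ _ => o end.

Definition set_root (o : option cell) (t : tree) : tree :=
  match t with Leaf _ => Leaf o | Node3 _ a b c => Node3 o a b c end.

Definition le_opt (x y : option cell) : bool :=
  match x, y with
  | Some x, Some y => ckey x <= ckey y
  | Some _, None => true
  | None, _ => false
  end.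

Definition pull (f : tree -> tree) (a b c : tree)
  : option cell * (tree * tree * tree) :=
  if le_opt (root a) (root b) && le_opt (root a) (root c) then
    (root a, (f a, b, c))
  else if le_opt (root b) (root c) then (root b, (a, f b, c))
  else if root c is Some _ then (root c, (a, b, f c))
  else (None, (a, b, c)).

Definition combine (o1 o2 : option cell) : option cell :=
  match o1, o2 with
  | Some x, Some y =>
      let lo := if ckey x <= ckey y then x else y in
      let hi := if ckey x <= ckey y then y else x in
      Some (hi.1, lo.1 :: lo.2 ++ hi.2)
  | Some x, None => Some x
  | None, Some y => Some y
  | None, None => None
  end.

(* Filling the (emptied) root of t; n is fuel (>= height t suffices and
   never runs out, since children have smaller height and fill preserves
   the shape). *)
Fixpoint refill_f (r0 n : nat) (t : tree) {struct n} : tree :=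
  match t with
  | Leaf _ => Leaf None
  | Node3 _ a b c =>
    match n with
    | 0 => Node3 None a b c
    | n'.+1 =>
      let f := refill_f r0 n' in
      let '(o1, (a1, b1, c1)) := pull f a b c in
      if height t <= r0 then Node3 o1 a1 b1 c1
      else let '(o2, (a2, b2, c2)) := pull f a1 b1 c1 in
           Node3 (combine o1 o2) a2 b2 c2
    end
  end.

Definition refill (r0 : nat) (t : tree) : tree := refill_f r0 (height t) t.

(* the heap: list of trees (front first, nondecreasing ranks) *)
Definition heap := seq tree.

Fixpoint link_loop (r0 n : nat) (ts : heap) : heap :=
  match n with
  | 0 => ts
  | n'.+1 =>
    match ts with
    | t1 :: t2 :: t3 :: rest =>
        if (height t1 == height t2) && (height t2 == height t3) then
          link_loop r0 n' (refill r0 (Node3 None t1 t2 t3) :: rest)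
        else ts
    | _ => ts
    end
  end.

Definition insert (r0 : nat) (e : item) (ts : heap) : heap :=
  let ts' := Leaf (Some (e, [::])) :: ts in link_loop r0 (size ts') ts'.

Definition is_min_root (ts : heap) (k : K) : bool :=
  all (fun t => if root t is Some c then k <= ckey c else true) ts.

(* extract-min (the choice of the returned item of C(e) is arbitrary) *)
Inductive extract_step (r0 : nat) : heap -> heap -> Prop :=
| ext_corrupt ts1 t ts2 e C1 x C2 :
    root t = Some (e, C1 ++ x :: C2) ->
    is_min_root (ts1 ++ t :: ts2) e.1 ->
    extract_step r0 (ts1 ++ t :: ts2)
                    (ts1 ++ set_root (Some (e, C1 ++ C2)) t :: ts2)
| ext_remove ts1 t ts2 e :
    root t = Some (e, [::]) ->
    is_min_root (ts1 ++ t :: ts2) e.1 ->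
    extract_step r0 (ts1 ++ t :: ts2) (ts1 ++ refill r0 t :: ts2).

Inductive reachable (r0 : nat) : seq item -> heap -> Prop :=
| reach_init : reachable r0 [::] [::]
| reach_insert ins h (e : item) :
    reachable r0 ins h -> e.1 \notin map fst ins ->
    reachable r0 (e :: ins) (insert r0 e h)
| reach_extract ins h h' :
    reachable r0 ins h -> extract_step r0 h h' -> reachable r0 ins h'.

Inductive stored_at : tree -> nat -> item -> seq item -> Prop :=
| st_here t e C : root t = Some (e, C) -> stored_at t (height t) e C
| st_a o a b c r e C : stored_at a r e C -> stored_at (Node3 o a b c) r e C
| st_b o a b c r e C : stored_at b r e C -> stored_at (Node3 o a b c) r e C
| st_c o a b c r e C : stored_at c r e C -> stored_at (Node3 o a b c) r e C.

End SoftHeap.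

(* Main.v *)
Require Import Defs.
From HB Require Import structures.
From mathcomp Require Import all_boot all_order all_algebra.
From mathcomp Require Import reals exp.
From Stdlib Require List.
From mathcomp Require Import zify.
Set Implicit Arguments. Unset Strict Implicit.
Import Order.TTheory GRing.Theory Num.Theory.

Section Proof.
Context {disp : Order.disp_t} {K : orderType disp} {V : Type}.
Variable r0 : nat.
Local Notation T := (@tree disp K V).
Local Notation cb := (c_bound r0).

Lemma cbE r : cb r = 2 ^ (r - r0) - 1.
Proof. rewrite /c_bound; case: ifP => // H; by rewrite (eqP H). Qed.

Lemma cb_mono m n : m <= n -> cb m <= cb n.
Proof.
move=> H; rewrite !cbE; apply: leq_sub2r; apply: leq_pexp2l => //.
exact: leq_sub2r.
Qed.

Lemma cb_step H : ~~ (H.+1 <= r0) -> (cb H).*2.+1 <= cb H.+1.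
Proof.
rewrite -ltnNge ltnS => HH; rewrite !cbE subSn // expnS.
have : 0 < 2 ^ (H - r0) by rewrite expn_gt0.
lia.
Qed.

Definition opt_ok (k : nat) (o : option (@cell disp K V)) : Prop :=
  match o with Some x => size x.2 <= k | None => True end.

Lemma opt_ok_mono k k' o : k <= k' -> opt_ok k o -> opt_ok k' o.
Proof. case: o => //= x H1 H2; exact: leq_trans H2 H1. Qed.

Fixpoint good (t : T) : Prop :=
  match t with
  | Leaf o => opt_ok (cb 0) o
  | Node3 o a b c => opt_ok (cb (height (Node3 o a b c))) o /\ good a /\ good b /\ good c
  end.

Definition goodC (t : T) : Prop :=
  match t with Leaf _ => True | Node3 _ a b c => good a /\ good b /\ good c end.

Lemma good_root t : good t -> opt_ok (cb (height t)) (Defs.root t).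
Proof. by case: t => [o|o a b c] /= => [|[]]. Qed.

Lemma good_C t : good t -> goodC t.
Proof. by case: t => [o|o a b c] //= [_]. Qed.

Lemma pull_ok (f : T -> T) a b c k :
  (forall t, good t -> good (f t) /\ height (f t) = height t) ->
  good a -> good b -> good c ->
  opt_ok k (Defs.root a) -> opt_ok k (Defs.root b) -> opt_ok k (Defs.root c) ->
  let p := pull f a b c in
  [/\ opt_ok k p.1, good p.2.1.1, good p.2.1.2, good p.2.2 &
    [/\ height p.2.1.1 = height a, height p.2.1.2 = height b &
        height p.2.2 = height c]].
Proof.
move=> Hf ga gb gc ra rb rc /=; rewrite /pull.
case: ifP => _; first by case: (Hf a ga) => g1 h1.
case: ifP => _; first by case: (Hf b gb) => g1 h1.
case: (Defs.root c) rc => [x|] rc /=; last by [].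
by case: (Hf c gc) => g1 h1.
Qed.

Lemma combine_ok k o1 o2 : opt_ok k o1 -> opt_ok k o2 -> opt_ok k.*2.+1 (combine o1 o2).
Proof.
case: o1 => [x|]; case: o2 => [y|] //=; try (move=> *; lia).
move=> H1 H2; case: ifP => _ /=; rewrite size_cat; lia.
Qed.

Lemma refill_ok n t : goodC t ->
  good (refill_f r0 n t) /\ height (refill_f r0 n t) = height t.
Proof.
elim: n t => [|n IH] [o|o a b c] //=.
- have Hf : forall t, good t -> good (refill_f r0 n t) /\ height (refill_f r0 n t) = height t.
    move=> t gt; apply: IH; exact: good_C.
  move=> [ga [gb gc]].
  set H := maxn (height a) (maxn (height b) (height c)).
  have ra : opt_ok (cb H) (Defs.root a).
    apply: (opt_ok_mono _ (good_root ga)); apply: cb_mono; rewrite /H; lia.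
  have rb : opt_ok (cb H) (Defs.root b).
    apply: (opt_ok_mono _ (good_root gb)); apply: cb_mono; rewrite /H; lia.
  have rc : opt_ok (cb H) (Defs.root c).
    apply: (opt_ok_mono _ (good_root gc)); apply: cb_mono; rewrite /H; lia.
  have := pull_ok Hf ga gb gc ra rb rc.
  case: (pull _ a b c) => o1 [[a1 b1] c1] /= [ok1 ga1 gb1 gc1 [ha1 hb1 hc1]].
  case: ifP => Hle.
  + rewrite /= ha1 hb1 hc1 -/H; split => //; split => //.
    apply: opt_ok_mono ok1; apply: cb_mono; lia.
  + have ra1 : opt_ok (cb H) (Defs.root a1) by rewrite -[X in cb X]/H; move: (good_root ga1); rewrite ha1; apply: opt_ok_mono; apply: cb_mono; rewrite /H; lia.
    have rb1 : opt_ok (cb H) (Defs.root b1) by move: (good_root gb1); rewrite hb1; apply: opt_ok_mono; apply: cb_mono; rewrite /H; lia.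
    have rc1 : opt_ok (cb H) (Defs.root c1) by move: (good_root gc1); rewrite hc1; apply: opt_ok_mono; apply: cb_mono; rewrite /H; lia.
    have := pull_ok Hf ga1 gb1 gc1 ra1 rb1 rc1.
    case: (pull _ a1 b1 c1) => o2 [[a2 b2] c2] /= [ok2 ga2 gb2 gc2 [ha2 hb2 hc2]].
    rewrite /= ha2 hb2 hc2 ha1 hb1 hc1 -/H; split => //; split => //.
    apply: opt_ok_mono (combine_ok ok1 ok2).
    apply: cb_step; exact: (negbT Hle).
Qed.

Definition allgood (h : seq T) := forall t, List.In t h -> good t.

Lemma link_ok n ts : allgood ts -> allgood (link_loop r0 n ts).
Proof.
elim: n ts => [|n IH] ts //= Hts.
case: ts Hts => [|t1 [|t2 [|t3 rest]]] Hts //.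
case: ifP => _ //; apply: IH => t /= [<-|Hin].
- apply: (proj1 (refill_ok _ _)) => /=.
  split; [apply: Hts; simpl; tauto|split; apply: Hts; simpl; tauto].
- apply: Hts; simpl; tauto.
Qed.

Lemma reach_ok ins h : reachable r0 ins h -> allgood h.
Proof.
elim => [|{}ins {}h e _ IH _|{}ins {}h h' _ IH st].
- by [].
- rewrite /insert; apply: link_ok => t /= [<-|Hin] /=; [by []|exact: IH].
- case: st IH => [ts1 t ts2 e C1 x C2 Hr _|ts1 t ts2 e Hr _] IH t' /List.in_app_iff
     [Hin|/= [<-|Hin]]; try (apply: IH; apply/List.in_app_iff; simpl; tauto).
  + have gt : good t by apply: IH; apply/List.in_app_iff; simpl; tauto.
    have Hs : size (C1 ++ C2) <= size (C1 ++ x :: C2) by rewrite !size_cat /=; lia.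
    clear IH; case: t Hr gt => [o|o a b c] /= -> /=.
    * move=> H; exact: leq_trans Hs H.
    * move=> [H g]; split => //; exact: leq_trans Hs H.
  + have gt : good t by apply: IH; apply/List.in_app_iff; simpl; tauto.
    exact: (proj1 (refill_ok _ (good_C gt))).
Qed.

Lemma stored_ok t r e C : good t -> stored_at t r e C -> size C <= cb r.
Proof.
move=> gt st; elim: st gt => {t r e C}.
- move=> t e C Hr gt; have := good_root gt; by rewrite Hr.
- by move=> o a b c r e C _ IH /= [_ [ga _]]; apply: IH.
- by move=> o a b c r e C _ IH /= [_ [_ [gb _]]]; apply: IH.
- by move=> o a b c r e C _ IH /= [_ [_ [_ gc]]]; apply: IH.
Qed.

End Proof.

Theorem mainTheorem10 (R : realType) (eps : R)
  (disp : Order.disp_t) (K : orderType disp) (V : Type) :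
  (0 < eps < 1)%R ->
  forall (ins : seq (@item _ K V)) (h : heap),
    reachable (r0_of eps) ins h ->
    forall t, List.In t h ->
    forall (r : nat) (e : item) (C : seq item),
      stored_at t r e C -> size C <= c_bound (r0_of eps) r.
Proof.
move=> _ ins h Hr t Hin r e C st.
exact: stored_ok (reach_ok Hr Hin) st.
Qed.
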